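(* Consider the system, with state $(s,e,v,q,c)$ in $\Omega=\{(s,e,v,q,c)\in\mathbb{R}_+^5: q\ge q_{\min}\}$, $$\dot s=-\tfrac1\gamma\varphi(s)e+d(s_{\rm in}-s),\quad \dot e=(1-\alpha)\varphi(s)e-de,\quad \dot v=\alpha\beta\varphi(s)e-\rho(v)c-dv,$$ $$\dot q=\rho(v)-\mu(q)q,\quad \dot c=\mu(q)c-dc,$$ with constant controls $\alpha\in(0,1)$ and $d>0$. Then the system has an equilibrium in $\Omega$ with $e>0$ and $c>0$ if and only if $d<\min\{(1-\alpha)\varphi_{\max},\psi_{\max}\}$ and $$\varphi^{-1}\!\left(\frac{d}{1-\alpha}\right)+\frac{\psi^{-1}(d)}{\alpha\beta\gamma}<s_{\rm in}.$$ In that case this equilibrium is unique and equals $(s^*,e^*,v^*,q^*,c^* )$ with $s^*=\varphi^{-1}(d/(1-\alpha))$, $e^*=(1-\alpha)\gamma(s_{\rm in}-s^* )$, $v^*=\psi^{-1}(d)$, $q^*=\mu^{-1}(d)$, $c^*=(v_{\rm in}^*-v^* )/q^*$ where $v_{\rm in}^*=\alpha\beta\gamma(s_{\rm in}-s^* )$.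
   Context: All parameters $s_{\rm in},\gamma,\beta,\varphi_{\max},k_s,\rho_{\max},k_v,q_{\min},\mu_{\max}$ are strictly positive. $\varphi(s)=\frac{\varphi_{\max}s}{k_s+s}$, $\rho(v)=\frac{\rho_{\max}v}{k_v+v}$ on $[0,\infty)$, $\mu(q)=\mu_{\max}(1-q_{\min}/q)$ on $[q_{\min},\infty)$. Inverses $\varphi^{-1}:[0,\varphi_{\max})\to[0,\infty)$, $\mu^{-1}:[0,\mu_{\max})\to[q_{\min},\infty)$, $\rho^{-1}:[0,\rho_{\max})\to[0,\infty)$. $\psi_{\max}=\frac{\mu_{\max}\rho_{\max}}{\rho_{\max}+q_{\min}\mu_{\max}}$ and $\psi^{-1}(y)=\rho^{-1}(y\,\mu^{-1}(y))$ for $y\in[0,\psi_{\max})$. *)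

(* Defs.v *)
From Stdlib Require Import Reals Lra.
Open Scope R_scope.

Definition phi (phimax ks s : R) : R := phimax * s / (ks + s).
Definition rho (rhomax kv v : R) : R := rhomax * v / (kv + v).
Definition mu (mumax qmin q : R) : R := mumax * (1 - qmin / q).

(* Their inverses (closed forms), on [0,phimax), [0,rhomax), [0,mumax). *)
Definition phi_inv (phimax ks y : R) : R := ks * y / (phimax - y).
Definition rho_inv (rhomax kv y : R) : R := kv * y / (rhomax - y).
Definition mu_inv (mumax qmin y : R) : R := qmin * mumax / (mumax - y).

Definition psi_max (mumax rhomax qmin : R) : R :=
  mumax * rhomax / (rhomax + qmin * mumax).
Definition psi_inv (mumax rhomax kv qmin y : R) : R :=
  rho_inv rhomax kv (y * mu_inv mumax qmin y).

Lemma phi_phi_inv phimax ks y :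
  0 < phimax -> 0 < ks -> 0 <= y < phimax ->
  0 <= phi_inv phimax ks y /\ phi phimax ks (phi_inv phimax ks y) = y.
Proof.
  intros Hp Hk Hy. unfold phi, phi_inv. split.
  - apply Rmult_le_pos; [nra|]. left; apply Rinv_0_lt_compat; lra.
  - field. split; [lra|]. nra.
Qed.

Lemma mu_mu_inv mumax qmin y :
  0 < mumax -> 0 < qmin -> 0 <= y < mumax ->
  qmin <= mu_inv mumax qmin y /\ mu mumax qmin (mu_inv mumax qmin y) = y.
Proof.
  intros Hm Hq Hy. unfold mu, mu_inv. split.
  - apply (Rmult_le_reg_r (mumax - y)); [lra|].
    unfold Rdiv. rewrite Rmult_assoc, Rinv_l by lra. nra.
  - field. split; lra.
Qed.

Section Model.
Variables (sin gamma beta phimax ks rhomax kv qmin mumax alpha d : R).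

Definition f_s s e := - / gamma * phi phimax ks s * e + d * (sin - s).
Definition f_e s e := (1 - alpha) * phi phimax ks s * e - d * e.
Definition f_v s e v c :=
  alpha * beta * phi phimax ks s * e - rho rhomax kv v * c - d * v.
Definition f_q v q := rho rhomax kv v - mu mumax qmin q * q.
Definition f_c q c := mu mumax qmin q * c - d * c.

Definition in_Omega s e v q c :=
  0 <= s /\ 0 <= e /\ 0 <= v /\ 0 <= q /\ 0 <= c /\ qmin <= q.

Definition is_equilibrium s e v q c :=
  in_Omega s e v q c /\
  f_s s e = 0 /\ f_e s e = 0 /\ f_v s e v c = 0 /\ f_q v q = 0 /\ f_c q c = 0.
End Model.

(* Main.v *)
Require Import Defs.
From Stdlib Require Import Reals Lra.
Open Scope R_scope.

Lemma inv_hyp pm k s y : 0 < pm -> 0 < k -> 0 <= s -> pm * s / (k + s) = y ->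
  y < pm /\ s = k * y / (pm - y).
Proof.
  intros Hp Hk Hs H.
  assert (E : y * (k + s) = pm * s) by (rewrite <- H; field; lra).
  assert (y < pm) by nra.
  split; [lra|]. apply (Rmult_eq_reg_r (pm - y)); [|lra].
  unfold Rdiv; rewrite Rmult_assoc, Rinv_l by lra. nra.
Qed.

Lemma inv_ok pm k y : 0 < pm -> 0 < k -> 0 <= y < pm ->
  0 <= k * y / (pm - y) /\ pm * (k * y / (pm - y)) / (k + k * y / (pm - y)) = y.
Proof.
  intros Hp Hk Hy. split.
  - apply Rmult_le_pos; [nra|]. left; apply Rinv_0_lt_compat; lra.
  - field. split; [lra|]. nra.
Qed.

Lemma mu_hyp mm qm q y : 0 < mm -> 0 < qm -> qm <= q -> mm * (1 - qm / q) = y ->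
  y < mm /\ q = qm * mm / (mm - y).
Proof.
  intros Hm Hq Hqq H.
  assert (E : mm - y = mm * qm / q) by (rewrite <- H; field; lra).
  assert (0 < mm * qm / q).
  { apply Rmult_lt_0_compat; [nra|]. apply Rinv_0_lt_compat; lra. }
  split; [lra|]. rewrite E. field. split; lra.
Qed.

Section S.
Variables (sin gamma beta phimax ks rhomax kv qmin mumax alpha d : R).
Hypotheses (Hsin : 0 < sin) (Hgamma : 0 < gamma) (Hbeta : 0 < beta)
  (Hphimax : 0 < phimax) (Hks : 0 < ks) (Hrhomax : 0 < rhomax)
  (Hkv : 0 < kv) (Hqmin : 0 < qmin) (Hmumax : 0 < mumax)
  (Halpha : 0 < alpha < 1) (Hd : 0 < d).

Lemma core s e v q c :
  is_equilibrium sin gamma beta phimax ks rhomax kv qmin mumax alpha d s e v q c ->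
  0 < e -> 0 < c ->
  d / (1 - alpha) < phimax /\ s = phi_inv phimax ks (d / (1 - alpha)) /\
  d < mumax /\ q = mu_inv mumax qmin d /\ d * q < rhomax /\
  v = rho_inv rhomax kv (d * q) /\ e = (1 - alpha) * gamma * (sin - s) /\
  c = (alpha * beta * gamma * (sin - s) - v) / q.
Proof using Hsin Hgamma Hbeta Hphimax Hks Hrhomax Hkv Hqmin Hmumax Halpha Hd.
  intros [[Hs [He0 [Hv [Hq0 [Hc0 Hq]]]]] [Fs [Fe [Fv [Fq Fc]]]]] He Hc.
  unfold f_s, f_e, f_v, f_q, f_c in *.
  set (P := phi phimax ks s) in *.
  set (M := mu mumax qmin q) in *.
  set (Rh := rho rhomax kv v) in *.
  assert (HP : P = d / (1 - alpha)).
  { apply (Rmult_eq_reg_r e); [|lra].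
    replace (d / (1 - alpha) * e) with (((1 - alpha) * P * e - d * e) * (- / (1 - alpha)) + P * e) by (field; lra).
    rewrite Fe; ring. }
  assert (HM : M = d).
  { apply (Rmult_eq_reg_r c); [|lra]. lra. }
  assert (HR : Rh = d * q) by (rewrite <- HM; lra).
  destruct (inv_hyp phimax ks s P Hphimax Hks Hs eq_refl) as [P1 P2].
  destruct (mu_hyp mumax qmin q M Hmumax Hqmin Hq eq_refl) as [M1 M2].
  destruct (inv_hyp rhomax kv v Rh Hrhomax Hkv Hv eq_refl) as [R1 R2].
  rewrite HP in Fs, P1, P2. rewrite HM in M1, M2. rewrite HR in Fv, R1, R2.
  assert (HE : e = (1 - alpha) * gamma * (sin - s)).
  { replace e with ((- / gamma * (d / (1 - alpha)) * e + d * (sin - s)) * (-(gamma * (1 - alpha) / d)) + (1 - alpha) * gamma * (sin - s)) by (field; lra).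
    rewrite Fs; ring. }
  rewrite HP, HE in Fv.
  repeat split; try assumption.
  replace c with ((alpha * beta * (d / (1 - alpha)) * ((1 - alpha) * gamma * (sin - s)) - d * q * c - d * v) * (- / (d * q)) + (alpha * beta * gamma * (sin - s) - v) / q) by (field; lra).
  rewrite Fv; field; lra.
Qed.
End S.

Theorem mainTheorem2
  (sin gamma beta phimax ks rhomax kv qmin mumax alpha d : R)
  (Hsin : 0 < sin) (Hgamma : 0 < gamma) (Hbeta : 0 < beta)
  (Hphimax : 0 < phimax) (Hks : 0 < ks) (Hrhomax : 0 < rhomax)
  (Hkv : 0 < kv) (Hqmin : 0 < qmin) (Hmumax : 0 < mumax)
  (Halpha : 0 < alpha < 1) (Hd : 0 < d) :
  ((exists s e v q c,
       is_equilibrium sin gamma beta phimax ks rhomax kv qmin mumax alpha d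
         s e v q c /\ 0 < e /\ 0 < c)
   <->
   (d < Rmin ((1 - alpha) * phimax) (psi_max mumax rhomax qmin) /\
    phi_inv phimax ks (d / (1 - alpha))
      + psi_inv mumax rhomax kv qmin d / (alpha * beta * gamma) < sin))
  /\
  (forall s e v q c,
     is_equilibrium sin gamma beta phimax ks rhomax kv qmin mumax alpha d
       s e v q c -> 0 < e -> 0 < c ->
     let sstar := phi_inv phimax ks (d / (1 - alpha)) in
     let vstar := psi_inv mumax rhomax kv qmin d in
     let qstar := mu_inv mumax qmin d in
     let vinstar := alpha * beta * gamma * (sin - sstar) in
     s = sstar /\
     e = (1 - alpha) * gamma * (sin - sstar) /\
     v = vstar /\
     q = qstar /\
     c = (vinstar - vstar) / qstar).
Proof.
  assert (Hpsi : d < mumax -> (d * mu_inv mumax qmin d < rhomax <-> d < psi_max mumax rhomax qmin)).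
  { intro Hdm. unfold mu_inv, psi_max.
    replace (d * (qmin * mumax / (mumax - d))) with (d * qmin * mumax / (mumax - d)) by (field; lra).
    split; intro H.
    - apply (Rmult_lt_reg_r (rhomax + qmin * mumax)); [nra|].
      unfold Rdiv in *. rewrite Rmult_assoc, Rinv_l by nra.
      apply (Rmult_lt_compat_r (mumax - d)) in H; [|lra].
      rewrite Rmult_assoc, Rinv_l in H by lra. nra.
    - apply (Rmult_lt_reg_r (mumax - d)); [lra|].
      unfold Rdiv in *. rewrite Rmult_assoc, Rinv_l by lra.
      apply (Rmult_lt_compat_r (rhomax + qmin * mumax)) in H; [|nra].
      rewrite Rmult_assoc, Rinv_l in H by nra. nra. }
  assert (Hpsimax : psi_max mumax rhomax qmin < mumax).
  { unfold psi_max. apply (Rmult_lt_reg_r (rhomax + qmin * mumax)); [nra|].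
    unfold Rdiv. rewrite Rmult_assoc, Rinv_l by nra. assert (0 < mumax * (qmin * mumax)) by (apply Rmult_lt_0_compat; nra). nra. }
  split; [split|].
  - intros [s [e [v [q [c [Heq [He Hc]]]]]]].
    destruct (core sin gamma beta phimax ks rhomax kv qmin mumax alpha d
      Hsin Hgamma Hbeta Hphimax Hks Hrhomax Hkv Hqmin Hmumax Halpha Hd s e v q c Heq He Hc)
      as [A1 [A2 [A3 [A4 [A5 [A6 [A7 A8]]]]]]].
    destruct Heq as [[Hs [He0 [Hv [Hq0 [Hc0 Hq]]]]] _].
    assert (Hd1 : d < (1 - alpha) * phimax).
    { apply (Rmult_lt_compat_r (1 - alpha)) in A1; [|lra].
      unfold Rdiv in A1; rewrite Rmult_assoc, Rinv_l in A1 by lra. lra. }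
    assert (Hd2 : d < psi_max mumax rhomax qmin) by (apply Hpsi; [lra| rewrite <- A4; lra]).
    split.
    + unfold Rmin; destruct (Rle_dec _ _); lra.
    + rewrite <- A2. unfold psi_inv. rewrite <- A4, <- A6.
      assert (Hq' : 0 < q) by lra.
      assert (0 < alpha * beta * gamma) by (apply Rmult_lt_0_compat; nra).
      assert (v < alpha * beta * gamma * (sin - s)).
      { assert (alpha * beta * gamma * (sin - s) - v = c * q) by (rewrite A8; field; lra). nra. }
      apply (Rmult_lt_reg_r (alpha * beta * gamma)); [lra|].
      rewrite Rmult_plus_distr_r. replace (v / (alpha * beta * gamma) * (alpha * beta * gamma)) with v by (field; lra). nra.
  - intros [Hdm Hineq].
    assert (Hd1 : d < (1 - alpha) * phimax) by (eapply Rlt_le_trans; [exact Hdm| apply Rmin_l]).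
    assert (Hd2 : d < psi_max mumax rhomax qmin) by (eapply Rlt_le_trans; [exact Hdm| apply Rmin_r]).
    assert (Hy : 0 <= d / (1 - alpha) < phimax).
    { split. { unfold Rdiv; apply Rmult_le_pos; [lra|]. left; apply Rinv_0_lt_compat; lra. }
      apply (Rmult_lt_reg_r (1 - alpha)); [lra|]. unfold Rdiv; rewrite Rmult_assoc, Rinv_l by lra. lra. }
    assert (Hdmu : d < mumax) by lra.
    destruct (mu_mu_inv mumax qmin d Hmumax Hqmin ltac:(lra)) as [Q1 Q2].
    set (qs := mu_inv mumax qmin d) in *.
    assert (Hrq : 0 <= d * qs < rhomax) by (split; [nra| apply Hpsi; auto]).
    destruct (inv_ok phimax ks _ Hphimax Hks Hy) as [S1 S2].
    destruct (inv_ok rhomax kv _ Hrhomax Hkv Hrq) as [V1 V2].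
    set (ss := ks * (d / (1 - alpha)) / (phimax - d / (1 - alpha))) in *.
    set (vs := kv * (d * qs) / (rhomax - d * qs)) in *.
    assert (Habg : 0 < alpha * beta * gamma) by (apply Rmult_lt_0_compat; nra).
    assert (Hvs0 : 0 <= vs / (alpha * beta * gamma)).
    { unfold Rdiv; apply Rmult_le_pos; [lra|]. left; apply Rinv_0_lt_compat; lra. }
    assert (Hineq' : ss + vs / (alpha * beta * gamma) < sin) by exact Hineq.
    assert (Hvs : vs < alpha * beta * gamma * (sin - ss)).
    { assert (vs / (alpha * beta * gamma) < sin - ss) by lra.
      apply (Rmult_lt_compat_r (alpha * beta * gamma)) in H; [|lra].
      unfold Rdiv in H; rewrite Rmult_assoc, Rinv_l in H by lra. lra. }
    exists ss, ((1 - alpha) * gamma * (sin - ss)), vs, qs,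
      ((alpha * beta * gamma * (sin - ss) - vs) / qs).
    assert (Hcpos : 0 < (alpha * beta * gamma * (sin - ss) - vs) / qs).
    { unfold Rdiv; apply Rmult_lt_0_compat; [lra|]. apply Rinv_0_lt_compat; lra. }
    assert (Hss : 0 < sin - ss) by lra.
    split; [|split; [apply Rmult_lt_0_compat; nra| exact Hcpos]].
    unfold is_equilibrium, in_Omega, f_s, f_e, f_v, f_q, f_c.
    fold qs. unfold phi, rho. rewrite S2, V2, Q2.
    repeat split; try lra; try (apply Rmult_le_pos; nra).
    + field; lra.
    + field; lra.
    + field; lra.
  - intros s e v q c Heq He Hc sstar vstar qstar vinstar.
    destruct (core sin gamma beta phimax ks rhomax kv qmin mumax alpha d
      Hsin Hgamma Hbeta Hphimax Hks Hrhomax Hkv Hqmin Hmumax Halpha Hd s e v q c Heq He Hc)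
      as [A1 [A2 [A3 [A4 [A5 [A6 [A7 A8]]]]]]].
    subst sstar vstar qstar vinstar. unfold psi_inv.
    rewrite <- A2, <- A4, <- A6. auto.
Qed.
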